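(* Let $\mathcal A=\{a_1,\dots,a_n\}\subset\mathbb Z^d$ with $n\ge d+2$ and $d$-dimensional convex hull, and let $\Delta_1,\Delta_2$ be two $d$-simplices of $\mathcal A$ which share a facet. Then there exists a regular subdivision of $\mathcal A$ containing $\Delta_1$ and $\Delta_2$, so the cone $\mathcal C_{\Delta_1,\Delta_2}$ is nonempty. Moreover, there exists a regular triangulation of $\mathcal A$ containing both simplices.
   Context: A $d$-simplex of $\mathcal A$ is a subset of $d+1$ affinely independent points. Two $d$-simplices share a facet if the intersection of their convex hulls is a facet (codimension-one face) of both. Regular subdivisions: for $h\in\mathbb R^n$, lift $a_j$ to $(a_j,h_j)\in\mathbb R^{d+1}$; lower faces of the convex hull of the lifted points are those with an inner normal of positive last coordinate; each lower face $F$ gives the cell $\{a_j:(a_j,h_j)\in F\}$; the collection of cells is the regular subdivision induced by $h$. It contains a simplex if that simplex is one of its cells. $\mathcal C_{\Delta_1,\Delta_2}$ is the set of $h\in\mathbb R^n$ inducing a regular subdivision containing $\Delta_1$ and $\Delta_2$. A regular triangulation is a regular subdivision each of whose cells consists of affinely independent points which are exactly the vertices of its convex hull. *)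

(* Defs.v *)
From mathcomp Require Import all_boot all_order all_algebra.
From mathcomp Require Import reals.
Set Implicit Arguments. Unset Strict Implicit. Unset Printing Implicit Defensive.
Import Order.TTheory GRing.Theory Num.Theory.
Local Open Scope ring_scope.

Section Defs.
Variable R : realType.
Variable d n : nat.

Definition dotv (u v : 'rV[R]_d) : R := \sum_(i < d) u ord0 i * v ord0 i.

Definition ptsR (aZ : 'I_n -> 'rV[int]_d) (j : 'I_n) : 'rV[R]_d :=
  map_mx (fun z : int => z%:~R) (aZ j).

Definition affindep_fam m (p : 'I_m -> 'rV[R]_d) : Prop :=
  forall l : 'I_m -> R, \sum_i l i = 0 -> \sum_i l i *: p i = 0 ->
    forall i, l i = 0.

Definition affindep_set (a : 'I_n -> 'rV[R]_d) (S : {set 'I_n}) : Prop :=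
  forall l : 'I_n -> R, (forall j, j \notin S -> l j = 0) ->
    \sum_j l j = 0 -> \sum_j l j *: a j = 0 -> forall j, l j = 0.

Definition conv (a : 'I_n -> 'rV[R]_d) (S : {set 'I_n}) : 'rV[R]_d -> Prop :=
  fun x => exists l : 'I_n -> R, (forall j, 0 <= l j) /\
    (forall j, j \notin S -> l j = 0) /\ \sum_j l j = 1 /\
    x = \sum_j l j *: a j.

Definition has_dim (F : 'rV[R]_d -> Prop) (k : nat) : Prop :=
  (exists p : 'I_k.+1 -> 'rV[R]_d, (forall i, F (p i)) /\ affindep_fam p) /\
  ~ (exists p : 'I_k.+2 -> 'rV[R]_d, (forall i, F (p i)) /\ affindep_fam p).

Definition is_face (P F : 'rV[R]_d -> Prop) : Prop :=
  exists (c : 'rV[R]_d) (b : R), (forall y, P y -> b <= dotv c y) /\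
    (forall y, F y <-> (P y /\ dotv c y = b)).

Definition is_facet (P F : 'rV[R]_d -> Prop) : Prop :=
  is_face P F /\ exists k, k.+1 = d /\ has_dim F k.

Definition is_vertex (P : 'rV[R]_d -> Prop) (x : 'rV[R]_d) : Prop :=
  exists (c : 'rV[R]_d) (b : R), (forall y, P y -> b <= dotv c y) /\
    (forall y, (P y /\ dotv c y = b) <-> y = x).

Definition is_simplex (a : 'I_n -> 'rV[R]_d) (S : {set 'I_n}) : Prop :=
  #|S| = d.+1 /\ affindep_set a S.

Definition share_facet (a : 'I_n -> 'rV[R]_d) (S1 S2 : {set 'I_n}) : Prop :=
  let F := fun x => conv a S1 x /\ conv a S2 x in
  is_facet (conv a S1) F /\ is_facet (conv a S2) F.

(* C is a cell of the regular subdivision induced by h: C = set of j whose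
   lifted point (a_j, h_j) lies on a lower face of conv{(a_j,h_j)}, i.e. a face
   with inner normal (c, c0), c0 > 0. *)
Definition lower_cell (a : 'I_n -> 'rV[R]_d) (h : 'I_n -> R)
    (C : {set 'I_n}) : Prop :=
  exists (c : 'rV[R]_d) (c0 b : R), 0 < c0 /\
    (forall j, b <= dotv c (a j) + c0 * h j) /\
    (forall j, (j \in C) = (dotv c (a j) + c0 * h j == b)).

Definition in_cone (a : 'I_n -> 'rV[R]_d) (S1 S2 : {set 'I_n})
    (h : 'I_n -> R) : Prop :=
  lower_cell a h S1 /\ lower_cell a h S2.

Definition regular_triangulation (a : 'I_n -> 'rV[R]_d) (h : 'I_n -> R) : Prop :=
  forall C, lower_cell a h C ->
    affindep_set a C /\
    (forall x, is_vertex (conv a C) x <-> exists2 j, j \in C & x = a j).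

End Defs.

(* Main.v *)
Require Import Defs.
From mathcomp Require Import all_boot all_order all_algebra.
From mathcomp Require Import reals.
From mathcomp Require Import boolp.
From mathcomp.algebra_tactics Require Import ring lra.
Set Implicit Arguments. Unset Strict Implicit. Unset Printing Implicit Defensive.
Import Order.TTheory GRing.Theory Num.Theory.
Local Open Scope ring_scope.


Definition liftv (R : realType) (d : nat) (x : 'rV[R]_d) : 'rV[R]_(d + 1) :=
  row_mx x (const_mx 1).

Definition famM (R : realType) (d m : nat) (p : 'I_m -> 'rV[R]_d) : 'M[R]_(m, d + 1) :=
  \matrix_i liftv (p i).

Lemma sum_liftv (R : realType) (d : nat) (I : finType) (l : I -> R) (x : I -> 'rV[R]_d) :
  \sum_i l i *: liftv (x i) = row_mx (\sum_i l i *: x i) (const_mx (\sum_i l i)).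
Proof.
apply/rowP => k; rewrite summxE.
case: (split_ordP k) => k' ->.
- rewrite [RHS]row_mxEl summxE; apply: eq_bigr => i _; by rewrite /liftv [in LHS]mxE row_mxEl mxE.
- rewrite [RHS]row_mxEr mxE; apply: eq_bigr => i _; by rewrite /liftv [in LHS]mxE row_mxEr mxE mulr1.
Qed.

Lemma mul_famM (R : realType) (d m : nat) (p : 'I_m -> 'rV[R]_d) (v : 'rV[R]_m) :
  v *m famM p = row_mx (\sum_i v 0 i *: p i) (const_mx (\sum_i v 0 i)).
Proof.
rewrite mulmx_sum_row -sum_liftv; apply: eq_bigr => i _; by rewrite rowK.
Qed.

Lemma const_mx_inj (R : realType) (s t : R) :
  (const_mx s : 'rV[R]_1) = const_mx t -> s = t.
Proof. by move/(congr1 (fun M : 'rV[R]_1 => M 0 0)); rewrite !mxE. Qed.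

Lemma fam_free (R : realType) (d m : nat) (p : 'I_m -> 'rV[R]_d) :
  affindep_fam p -> row_free (famM p).
Proof.
move=> Hp; apply: inj_row_free => v; rewrite mul_famM.
move/eqP; rewrite row_mx_eq0 => /andP [/eqP H1 /eqP H2].
have H2' : \sum_i v 0 i = 0.
  by apply: const_mx_inj; rewrite H2; apply/rowP => k; rewrite !mxE.
apply/rowP => i; rewrite mxE; exact: Hp H2' H1 i.
Qed.

Lemma fam_rank (R : realType) (d m t : nat) (p : 'I_m -> 'rV[R]_d)
   (q : 'I_t -> 'rV[R]_d) (L : 'I_m -> 'I_t -> R) :
  (forall i, p i = \sum_k L i k *: q k) -> (forall i, \sum_k L i k = 1) ->
  (t < m)%N -> ~ affindep_fam p.
Proof.
move=> Hp HL Htm /fam_free Hfree.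
have E : famM p = (\matrix_(i, k) L i k) *m famM q.
  apply/row_matrixP => i; rewrite row_mul rowK mul_famM.
  rewrite /liftv Hp -(HL i); congr row_mx.
    by apply: eq_bigr => k _; rewrite !mxE.
  by congr const_mx; apply: eq_bigr => k _; rewrite !mxE.
move: Hfree; rewrite /row_free E => /eqP Hr.
have := mxrankM_maxl (\matrix_(i, k) L i k) (famM q).
rewrite Hr => H; have := leq_trans H (rank_leq_col _).
by rewrite leqNgt Htm.
Qed.

Lemma fam_span (R : realType) (d : nat) (p : 'I_(d + 1) -> 'rV[R]_d) (x : 'rV[R]_d) :
  affindep_fam p -> exists mu : 'I_(d + 1) -> R,
    \sum_i mu i = 1 /\ x = \sum_i mu i *: p i.
Proof.
move=> /fam_free; rewrite row_free_unit => Hu.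
set v := liftv x *m invmx (famM p).
have Hv : v *m famM p = liftv x by rewrite mulmxKV.
move: Hv; rewrite mul_famM /liftv => /eq_row_mx [H1 H2].
exists (fun i => v 0 i); split; last by [].
exact: const_mx_inj.
Qed.

Lemma fam_ext (R : realType) (d m : nat) (p : 'I_m -> 'rV[R]_d) (w : 'I_m -> R) :
  affindep_fam p -> exists (c : 'rV[R]_d) (beta : R),
    forall i, dotv c (p i) + beta = w i.
Proof.
move=> /fam_free /row_freeP [B HB].
set X := B *m (\col_i w i).
have HX : famM p *m X = \col_i w i by rewrite /X mulmxA HB mul1mx.
exists (\row_k X (lshift 1 k) 0), (X (rshift d 0) 0) => i.
have := congr1 (fun M : 'cV[R]_m => M i 0) HX; rewrite !mxE => <-.
rewrite big_split_ord /= big_ord1 /dotv; congr (_ + _).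
  apply: eq_bigr => k _; rewrite mxE [famM p i _]mxE /liftv row_mxEl mulrC.
  by [].
rewrite /famM [X in _ = X * _]mxE /liftv row_mxEr mxE mul1r /X [RHS]mxE; done.
Qed.



Lemma conv_pt (R : realType) (d n : nat) (a : 'I_n -> 'rV[R]_d) (S : {set 'I_n}) j :
  j \in S -> conv a S (a j).
Proof.
move=> Hj; exists (fun i => (i == j)%:R); split; first by move=> i; rewrite ler0n.
split; first by move=> i Hi; case: eqP Hi => // ->; rewrite Hj.
split.
  rewrite (bigD1 j) //= eqxx big1 ?addr0 // => i /negbTE ->; by [].
rewrite (bigD1 j) //= eqxx scale1r big1 ?addr0 // => i /negbTE ->; by rewrite scale0r.
Qed.

Lemma dotv_sum (R : realType) (d : nat) (I : finType) (c : 'rV[R]_d) (l : I -> R) x :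
  dotv c (\sum_i l i *: x i) = \sum_i l i * dotv c (x i).
Proof.
rewrite /dotv.
under eq_bigr => k _ do rewrite summxE mulr_sumr.
rewrite exchange_big; apply: eq_bigr => i _; rewrite mulr_sumr.
by apply: eq_bigr => k _; rewrite mxE mulrCA.
Qed.

Lemma aff_eval (R : realType) (d : nat) (I : finType) (c : 'rV[R]_d) (b : R) (l : I -> R) x :
  \sum_i l i = 1 ->
  dotv c (\sum_i l i *: x i) - b = \sum_i l i * (dotv c (x i) - b).
Proof.
move=> Hl; rewrite dotv_sum.
under [RHS]eq_bigr => i _ do rewrite mulrBr.
by rewrite sumrB -mulr_suml Hl mul1r.
Qed.

Lemma face_conv (R : realType) (d n : nat) (a : 'I_n -> 'rV[R]_d) (S : {set 'I_n})
  (c : 'rV[R]_d) (b : R) :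
  (forall y, conv a S y -> b <= dotv c y) ->
  forall y, (conv a S y /\ dotv c y = b) <-> conv a [set j in S | dotv c (a j) == b] y.
Proof.
move=> Hb y; split.
- move=> [[l [Hl0 [Hl1 [Hl2 ->]]]] Hy].
  exists l; split => //; split => //.
  have H0 : \sum_j l j * (dotv c (a j) - b) = 0.
    by rewrite -aff_eval // Hy subrr.
  have Hge : forall j, true -> 0 <= l j * (dotv c (a j) - b).
    move=> j _; case: (boolP (j \in S)) => Hj.
      by rewrite mulr_ge0 // subr_ge0; apply: Hb; apply: conv_pt.
    by rewrite Hl1 // mul0r.
  move=> j; rewrite inE negb_and => /orP [/Hl1 //|Hne].
  case: (boolP (j \in S)) => Hj; last by rewrite Hl1.
  have := psumr_eq0P Hge H0 (i:=j) isT.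
  move/eqP; rewrite mulf_eq0 subr_eq0 (negbTE Hne) orbF => /eqP //.
- move=> [l [Hl0 [Hl1 [Hl2 ->]]]]; split.
    exists l; split; first by [].
    split; last by [].
    by move=> j Hj; apply: Hl1; rewrite inE negb_and Hj.
  apply/eqP; rewrite -subr_eq0; apply/eqP. rewrite (@aff_eval _ _ _ c b l a) //.
  apply: big1 => j _; case: (boolP (j \in [set j in S | dotv c (a j) == b])).
    by rewrite inE => /andP [_ /eqP ->]; rewrite subrr mulr0.
  by move/Hl1 ->; rewrite mul0r.
Qed.

Lemma enum_fam (n m : nat) (S : {set 'I_n}) :
  #|S| = m -> exists e : 'I_m -> 'I_n,
    [/\ injective e, (forall i, e i \in S) & (forall j, j \in S -> exists i, e i = j)].
Proof.
move=> Hm; exists (fun i => enum_val (cast_ord (esym Hm) i)); split.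
- by move=> i1 i2 /enum_val_inj /cast_ord_inj.
- by move=> i; apply: enum_valP.
- move=> j Hj; exists (cast_ord Hm (enum_rank_in Hj j)).
  by rewrite cast_ordK enum_rankK_in.
Qed.

Definition push (n m : nat) (R : realType) (e : 'I_m -> 'I_n) (mu : 'I_m -> R) (j : 'I_n) : R :=
  \sum_i (e i == j)%:R * mu i.

Lemma push_sumZ (n m : nat) (R : realType) (V : lmodType R) (e : 'I_m -> 'I_n)
  (mu : 'I_m -> R) (x : 'I_n -> V) :
  \sum_j push e mu j *: x j = \sum_i mu i *: x (e i).
Proof.
rewrite /push; under eq_bigr => j _ do rewrite scaler_suml.
rewrite exchange_big; apply: eq_bigr => i _.
rewrite (bigD1 (e i)) //= eqxx mul1r big1 ?addr0 // => j /negbTE Hj.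
by rewrite eq_sym Hj mul0r scale0r.
Qed.

Lemma push_sum (n m : nat) (R : realType) (e : 'I_m -> 'I_n) (mu : 'I_m -> R) :
  \sum_j push e mu j = \sum_i mu i.
Proof.
have := push_sumZ (V := R^o) e mu (fun _ => 1).
under eq_bigr => j _ do rewrite [_ *: _]mulr1.
by move=> ->; apply: eq_bigr => i _; rewrite [_ *: _]mulr1.
Qed.

Lemma push_e (n m : nat) (R : realType) (e : 'I_m -> 'I_n) (mu : 'I_m -> R) i :
  injective e -> push e mu (e i) = mu i.
Proof.
move=> He; rewrite /push (bigD1 i) //= eqxx mul1r big1 ?addr0 // => k Hk.
by rewrite (inj_eq He) (negbTE Hk) mul0r.
Qed.

Lemma push_out (n m : nat) (R : realType) (e : 'I_m -> 'I_n) (mu : 'I_m -> R) j :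
  (forall i, e i != j) -> push e mu j = 0.
Proof. by move=> H; rewrite /push big1 // => i _; rewrite (negbTE (H i)) mul0r. Qed.

Lemma indep_fam (R : realType) (d n m : nat) (a : 'I_n -> 'rV[R]_d) (S : {set 'I_n})
  (e : 'I_m -> 'I_n) :
  injective e -> (forall i, e i \in S) -> affindep_set a S ->
  affindep_fam (fun i => a (e i)).
Proof.
move=> He HeS HS l Hl1 Hl2 i.
rewrite -(push_e l i He); apply: HS.
- move=> j Hj; apply: push_out => k; apply/negP => /eqP Hk.
  by move: Hj; rewrite -Hk HeS.
- by rewrite push_sum.
- by rewrite push_sumZ.
Qed.



Lemma push_id (n m : nat) (R : realType) (S : {set 'I_n}) (e : 'I_m -> 'I_n) (l : 'I_n -> R) :
  injective e -> (forall k, e k \in S) -> (forall j, j \in S -> exists k, e k = j) ->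
  (forall j, j \notin S -> l j = 0) -> forall j, push e (fun k => l (e k)) j = l j.
Proof.
move=> He HeS HSe Hl j; case: (boolP (j \in S)) => Hj.
  by have [k <-] := HSe j Hj; rewrite push_e.
rewrite Hl // push_out // => k; apply/eqP => Hk; by move: Hj; rewrite -Hk HeS.
Qed.

Lemma L2set (R : realType) (d n m : nat) (a : 'I_n -> 'rV[R]_d) (T : {set 'I_n})
  (p : 'I_m -> 'rV[R]_d) :
  (forall i, conv a T (p i)) -> (#|T| < m)%N -> ~ affindep_fam p.
Proof.
move=> Hp Hm.
have [e [He HeT HTe]] := enum_fam (erefl #|T|).
have [L HL] := choice Hp.
apply: (@fam_rank R d m #|T| p (fun k => a (e k)) (fun i k => L i (e k))) => //.
- move=> i; have [_ [Hl1 [_ ->]]] := HL i; rewrite -(push_sumZ e).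
  by apply: eq_bigr => j _; rewrite (push_id He HeT HTe).
- move=> i; have [_ [Hl1 [Hl2 _]]] := HL i; rewrite -(push_sum e) -Hl2.
  by apply: eq_bigr => j _; rewrite (push_id He HeT HTe).
Qed.

Lemma L1set (R : realType) (d n : nat) (a : 'I_n -> 'rV[R]_d) (S : {set 'I_n}) :
  #|S| = d.+1 -> affindep_set a S -> forall x, exists mu : 'I_n -> R,
    (forall j, j \notin S -> mu j = 0) /\ \sum_j mu j = 1 /\ x = \sum_j mu j *: a j.
Proof.
move=> HS Hind x.
have Hm : #|S| = (d + 1)%N by rewrite addn1.
have [e [He HeS HSe]] := enum_fam Hm.
have [mu [Hmu1 Hmu2]] := fam_span x (indep_fam He HeS Hind).
exists (push e mu); split; last split.
- move=> j Hj; apply: push_out => k; apply/eqP => Hk; by move: Hj; rewrite -Hk HeS.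
- by rewrite push_sum.
- by rewrite push_sumZ.
Qed.

Lemma L3set (R : realType) (d n : nat) (a : 'I_n -> 'rV[R]_d) (S : {set 'I_n}) (w : 'I_n -> R) :
  affindep_set a S -> exists (c : 'rV[R]_d) (beta : R),
    forall j, j \in S -> dotv c (a j) + beta = w j.
Proof.
move=> Hind.
have [e [He HeS HSe]] := enum_fam (erefl #|S|).
have [c [beta Hc]] := fam_ext (fun k => w (e k)) (indep_fam He HeS Hind).
exists c, beta => j Hj; have [k <-] := HSe j Hj; exact: Hc.
Qed.

Lemma vertex_indep (R : realType) (d n : nat) (a : 'I_n -> 'rV[R]_d) (S : {set 'I_n}) k :
  affindep_set a S -> k \in S -> is_vertex (conv a S) (a k).
Proof.
move=> Hind Hk.
have [c [beta Hc]] := L3set (fun j => (j != k)%:R) Hind.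
have Hev : forall y, conv a S y -> exists l : 'I_n -> R,
   (forall j, 0 <= l j) /\ (forall j, j \notin S -> l j = 0) /\ \sum_j l j = 1 /\
   y = \sum_j l j *: a j /\
   dotv c y - (- beta) = \sum_j l j * (j != k)%:R.
  move=> y [l [Hl0 [Hl1 [Hl2 Hy]]]]; exists l; do 4 split => //.
  rewrite Hy aff_eval //; apply: eq_bigr => j _.
  case: (boolP (j \in S)) => Hj; first by rewrite opprK Hc.
  by rewrite Hl1 // !mul0r.
exists c, (- beta); split.
  move=> y /Hev [l [Hl0 [Hl1 [_ [_ H]]]]]; rewrite -subr_ge0 H.
  by apply: sumr_ge0 => j _; rewrite mulr_ge0.
move=> y; split.
- move=> [Hy Hyb]; have [l [Hl0 [Hl1 [Hl2 [Hy' H]]]]] := Hev y Hy.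
  have H0 : \sum_j l j * (j != k)%:R = 0 by rewrite -H Hyb subrr.
  have Hz : forall j, j != k -> l j = 0.
    move=> j Hjk; have := psumr_eq0P (P := predT) (fun j _ => mulr_ge0 (Hl0 j) (ler0n _ _)) H0 (i := j) isT.
    by rewrite Hjk mulr1.
  rewrite Hy' (bigD1 k) //= big1 ?addr0; last by move=> j /Hz ->; rewrite scale0r.
  move: Hl2; rewrite (bigD1 k) //= big1 ?addr0 => [->|]; first by rewrite scale1r.
  by move=> j /Hz.
- move=> ->; split; first exact: conv_pt.
  by apply/eqP; rewrite -subr_eq0 opprK Hc // eqxx.
Qed.

Lemma vertex_pt (R : realType) (d n : nat) (a : 'I_n -> 'rV[R]_d) (S : {set 'I_n}) x :
  is_vertex (conv a S) x -> exists2 j, j \in S & x = a j.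
Proof.
move=> [c [b [H1 H2]]].
have [[l [Hl0 [Hl1 [Hl2 Hx]]]] Hxb] := (proj2 (H2 x) erefl).
have H0 : \sum_j l j * (dotv c (a j) - b) = 0.
  by rewrite -aff_eval // -Hx Hxb subrr.
have Hge : forall j, true -> 0 <= l j * (dotv c (a j) - b).
  move=> j _; case: (boolP (j \in S)) => Hj.
    by rewrite mulr_ge0 // subr_ge0; apply: H1; apply: conv_pt.
  by rewrite Hl1 // mul0r.
case: (boolP [exists j, l j != 0]) => [/existsP [j Hj] | /existsPn H]; last first.
  move: Hl2; rewrite big1 => [/esym/eqP|j _]; first by rewrite oner_eq0.
  by apply/eqP; move: (H j); rewrite negbK.
have HjS : j \in S by apply: contraR Hj => /Hl1 ->; rewrite eqxx.
exists j => //.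
have := psumr_eq0P Hge H0 (i := j) isT.
move/eqP; rewrite mulf_eq0 (negbTE Hj) /= subr_eq0 => /eqP Hjb.
by apply/esym; apply: (proj1 (H2 (a j))); split => //; apply: conv_pt.
Qed.



Lemma exists_nz (R : realType) (n : nat) (l : 'I_n -> R) :
  \sum_j l j = 1 -> exists j, l j != 0.
Proof.
move=> Hl; case: (boolP [exists j, l j != 0]) => [/existsP [j Hj] | /existsPn H].
  by exists j.
move: Hl; rewrite big1 => [/esym/eqP|j _]; first by rewrite oner_eq0.
by apply/eqP; move: (H j); rewrite negbK.
Qed.

Lemma dotvN (R : realType) (d : nat) (c x : 'rV[R]_d) : dotv (- c) x = - dotv c x.
Proof. by rewrite /dotv -sumrN; apply: eq_bigr => k _; rewrite mxE mulNr. Qed.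

Lemma dotv0l (R : realType) (d : nat) (x : 'rV[R]_d) : dotv 0 x = 0.
Proof. by rewrite /dotv big1 // => k _; rewrite mxE mul0r. Qed.

Lemma dotv0r (R : realType) (d : nat) (c : 'rV[R]_d) : dotv c 0 = 0.
Proof. by rewrite /dotv big1 // => k _; rewrite mxE mulr0. Qed.

Lemma card_one_out (n d : nat) (S T : {set 'I_n}) :
  T \subset S -> #|S| = d.+1 -> #|T| = d ->
  exists v, [/\ v \in S, v \notin T & forall j, j \in S -> j \notin T -> j = v].
Proof.
move=> HTS HS HT.
have : #|S :\: T| == 1%N.
  by rewrite cardsD (setIidPr HTS) HS HT subSnn.
move/cards1P => [v Hv]; exists v.
have : v \in S :\: T by rewrite Hv set11.
rewrite in_setD => /andP [H1 H2]; split => // j Hj HjT.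
have : j \in S :\: T by rewrite in_setD HjT Hj.
by rewrite Hv inE => /eqP.
Qed.

Lemma ptsR_inj (R : realType) (d n : nat) (aZ : 'I_n -> 'rV[int]_d) :
  injective aZ -> injective (ptsR R aZ).
Proof.
move=> Hinj i j H; apply: Hinj; apply/matrixP => x y.
have := congr1 (fun M : 'rV[R]_d => M x y) H; rewrite /ptsR !mxE.
exact: intr_inj.
Qed.



Lemma geom (R : realType) (d n : nat) (a : 'I_n -> 'rV[R]_d) (S1 S2 : {set 'I_n}) :
  injective a ->
  is_simplex a S1 -> is_simplex a S2 -> share_facet a S1 S2 ->
  exists (c : 'rV[R]_d) (b : R) (v2 : 'I_n),
  [/\ (forall j, j \in S1 -> 0 <= dotv c (a j) - b),
      (forall j, j \in S1 -> (dotv c (a j) - b == 0) = (j \in S2)),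
      v2 \in S2 /\ v2 \notin S1, dotv c (a v2) - b < 0 &
      (forall j, j \in S2 -> j \notin S1 -> j = v2)].
Proof.
move=> ainj [HcS1 HiS1] [HcS2 HiS2] [[[c [b [Hb HF1]]] [k [Hk Hdim]]] [[c' [b' [Hb' HF2]]] _]].
set T := [set j in S1 | dotv c (a j) == b].
set T2 := [set j in S2 | dotv c' (a j) == b'].
have FT : forall y, (conv a S1 y /\ conv a S2 y) <-> conv a T y.
  move=> y; rewrite -face_conv //; exact: HF1.
have FT2 : forall y, (conv a S1 y /\ conv a S2 y) <-> conv a T2 y.
  move=> y; rewrite -face_conv //; exact: HF2.
have HTS1 : T \subset S1 by apply/subsetP => j; rewrite inE => /andP [].
have HT2S2 : T2 \subset S2 by apply/subsetP => j; rewrite inE => /andP [].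
have cardT : (d <= #|T|)%N.
  rewrite leqNgt; apply/negP => Hlt.
  move: Hdim => [[p [Hp Hpi]] _].
  apply: (L2set (a := a) (T := T) _ _ Hpi); last by rewrite Hk.
  by move=> i; apply/FT/Hp.
have StepB : forall S T' : {set 'I_n}, T' \subset S -> #|S| = d.+1 -> affindep_set a S ->
    (forall y, (conv a S1 y /\ conv a S2 y) <-> conv a T' y) -> (#|T'| <= d)%N.
  move=> S T' HT' HS HiS FT'; rewrite leqNgt; apply/negP => Hlt.
  have E : T' = S by apply/eqP; rewrite eqEcard HT' HS.
  move: Hdim => [_]; apply.
  have HS' : #|S| = k.+2 by rewrite HS -Hk.
  have [e [He HeS HSe]] := enum_fam HS'.
  exists (fun i => a (e i)); split; last exact: indep_fam He HeS HiS.
  by move=> i; apply/FT'; rewrite E; apply: conv_pt.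
have cardT2 := StepB _ _ HT2S2 HcS2 HiS2 FT2.
have HTT2 : T \subset T2.
  apply/subsetP => t Ht.
  have Ft := proj2 (FT (a t)) (conv_pt a Ht).
  have [m [Hm0 [Hm1 [Hm2 Hat]]]] := proj1 (FT2 (a t)) Ft.
  have [c0 [b0 [Hv1 Hv2]]] := vertex_indep HiS1 (subsetP HTS1 t Ht).
  have Hs1 : forall s, s \in T2 -> conv a S1 (a s).
    by move=> s Hs; exact: (proj1 (proj2 (FT2 (a s)) (conv_pt a Hs))).
  have H0 : \sum_s m s * (dotv c0 (a s) - b0) = 0.
    rewrite -aff_eval // -Hat.
    by have [_ ->] := proj2 (Hv2 (a t)) erefl; rewrite subrr.
  have Hge : forall s, true -> 0 <= m s * (dotv c0 (a s) - b0).
    move=> s _; case: (boolP (s \in T2)) => Hs.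
      by rewrite mulr_ge0 // subr_ge0; apply: Hv1; apply: Hs1.
    by rewrite Hm1 // mul0r.
  have [s Hs] := exists_nz Hm2.
  have HsT2 : s \in T2 by apply: contraR Hs => /Hm1 ->; rewrite eqxx.
  have := psumr_eq0P Hge H0 (i := s) isT.
  move/eqP; rewrite mulf_eq0 (negbTE Hs) /= subr_eq0 => /eqP Hsb.
  have Eas : a s = a t by apply: (proj1 (Hv2 (a s))); split => //; apply: Hs1.
  by rewrite -(ainj _ _ Eas).
have ET : T = T2.
  apply/eqP; rewrite eqEcard HTT2 /=; exact: leq_trans cardT2 cardT.
have cardTd : #|T| = d.
  apply/eqP; rewrite eqn_leq cardT andbT ET //.
have HTS2 : T \subset S2 by rewrite ET.
have [v1 [Hv1S Hv1T Hv1u]] := card_one_out HTS1 HcS1 cardTd.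
have [v2 [Hv2S Hv2T Hv2u]] := card_one_out HTS2 HcS2 cardTd.
have hT : forall j, (j \in T) = (j \in S1) && (dotv c (a j) == b) by move=> j; rewrite inE.
have hT2 : forall j, (j \in T2) = (j \in S2) && (dotv c' (a j) == b') by move=> j; rewrite inE.
have hv1 : 0 < dotv c (a v1) - b.
  rewrite lt_def subr_ge0 Hb ?andbT; last exact: conv_pt.
  by rewrite subr_eq0; apply: contra Hv1T => Hq; rewrite hT Hv1S.
have hv2' : 0 < dotv c' (a v2) - b'.
  rewrite lt_def subr_ge0 Hb' ?andbT; last exact: conv_pt.
  by rewrite subr_eq0; apply: contra Hv2T => Hq; rewrite ET hT2 Hv2S.
have hT' : forall j, j \in T -> dotv c' (a j) - b' = 0.
  by move=> j; rewrite ET hT2 => /andP [_ /eqP ->]; rewrite subrr.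
have StepE : dotv c (a v2) - b < 0.
  rewrite ltNge; apply/negP => Hge.
  have [mu [Hmu0 [Hmu1 Hmu2]]] := L1set HcS1 HiS1 (a v2).
  have Hmv : dotv c (a v2) - b = mu v1 * (dotv c (a v1) - b).
    rewrite {1}Hmu2 aff_eval // (bigD1 v1) //= big1 ?addr0 // => j Hj.
    case: (boolP (j \in S1)) => HjS; last by rewrite Hmu0 // mul0r.
    have HjT : j \in T.
      apply: contraR Hj => HjT; apply/eqP; exact: Hv1u.
    by move: HjT; rewrite hT => /andP [_ /eqP ->]; rewrite subrr mulr0.
  have Hmu1pos : 0 <= mu v1 by rewrite -(pmulr_lge0 _ hv1) -Hmv.
  set K := \sum_j `|mu j|.
  have HK : 0 <= K by apply: sumr_ge0 => j _; exact: normr_ge0.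
  have HmuK : forall j, `|mu j| <= K.
    move=> j; rewrite /K (bigD1 j) //= lerDl sumr_ge0 // => i _; exact: normr_ge0.
  have Hden : 0 < d%:R * K + 1.
    have : 0 <= d%:R * K by rewrite mulr_ge0 ?ler0n.
    move=> h; lra.
  set eps := (d%:R * K + 1)^-1.
  have Heps : 0 < eps by rewrite invr_gt0.
  have HepsE : eps * (d%:R * K + 1) = 1 by rewrite mulVf // gt_eqF.
  have sumT : \sum_j (j \in T)%:R = d%:R :> R.
    have : \sum_(j in T) (1:R) = d%:R by rewrite sumr_const cardTd.
    by rewrite big_mkcond => <-; apply: eq_bigr => j _; case: (j \in T).
  have gen : forall u : 'I_n -> R,
      \sum_j (eps * ((j \in T)%:R * K + u j)) *: a j =
      eps *: (K *: \sum_j (j \in T)%:R *: a j + \sum_j u j *: a j).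
    move=> u; rewrite scalerDr !scaler_sumr -big_split; apply: eq_bigr => j _.
    rewrite !scalerA /= -scalerDl; congr (_ *: _); ring.
  have gens : forall u : 'I_n -> R,
      \sum_j (eps * ((j \in T)%:R * K + u j)) = eps * (d%:R * K + \sum_j u j).
    move=> u; rewrite -mulr_sumr big_split /= -mulr_suml sumT //.
  have Hq : \sum_j (eps * ((j \in T)%:R * K + mu j)) *: a j =
            \sum_j (eps * ((j \in T)%:R * K + (j == v2)%:R)) *: a j.
    rewrite !gen; congr (_ *: (_ + _)); rewrite -Hmu2 (bigD1 v2) //= eqxx scale1r.
    by rewrite big1 ?addr0 // => j /negbTE ->; rewrite scale0r.
  have Hsv2 : \sum_j ((j == v2)%:R : R) = 1.
    by rewrite (bigD1 v2) //= eqxx big1 ?addr0 // => j /negbTE ->.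
  have Hs1 : conv a S1 (\sum_j (eps * ((j \in T)%:R * K + mu j)) *: a j).
    exists (fun j => eps * ((j \in T)%:R * K + mu j)); split; [|split; [|split]] => //.
    - move=> j; apply: mulr_ge0; first exact: ltW.
      case: (boolP (j \in T)) => HjT.
        have h1 := HmuK j; have h2 : - mu j <= `|mu j| by rewrite -normrN ler_norm.
        rewrite mul1r; lra.
      rewrite mul0r add0r; case: (boolP (j \in S1)) => HjS; last by rewrite Hmu0.
      by rewrite (Hv1u j HjS HjT).
    - move=> j HjS; have HjT : j \notin T by apply: contra HjS; apply: (subsetP HTS1).
      by rewrite (negbTE HjT) Hmu0 // mul0r addr0 mulr0.
    - by rewrite gens Hmu1.
  have Hs2 : conv a S2 (\sum_j (eps * ((j \in T)%:R * K + mu j)) *: a j).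
    rewrite Hq; exists (fun j => eps * ((j \in T)%:R * K + (j == v2)%:R)).
    split; [|split; [|split]] => //.
    - move=> j; apply: mulr_ge0; first exact: ltW.
      by apply: addr_ge0; [apply: mulr_ge0 | ]; rewrite ?ler0n.
    - move=> j HjS; have HjT : j \notin T by apply: contra HjS; apply: (subsetP HTS2).
      have Hjv : j != v2 by apply: contra HjS => /eqP ->.
      by rewrite (negbTE HjT) (negbTE Hjv) mul0r addr0 mulr0.
    - by rewrite gens Hsv2.
  have [_ Hdq] := proj1 (HF2 _) (conj Hs1 Hs2).
  move: Hdq; rewrite Hq => /eqP; rewrite -subr_eq0 aff_eval; last by rewrite gens Hsv2.
  rewrite (bigD1 v2) //= big1 ?addr0.
    rewrite (negbTE Hv2T) eqxx mul0r add0r mulr1 mulf_eq0 => /orP [] /eqP.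
      by move=> h; move: Heps; rewrite h ltxx.
    by move=> h; move: hv2'; rewrite h ltxx.
  move=> j Hj; case: (boolP (j \in T)) => HjT; first by rewrite hT' // mulr0.
  by rewrite (negbTE Hj) mul0r addr0 mulr0 mul0r.
have Hv2S1 : v2 \notin S1.
  apply/negP => H; have E2 := Hv1u v2 H Hv2T.
  by move: StepE; rewrite E2 ltNge (ltW hv1).
have Hv1S2 : v1 \notin S2.
  apply/negP => H; have E2 := Hv2u v1 H Hv1T.
  by move: Hv1S; rewrite E2 (negbTE Hv2S1).
exists c, b, v2; split => //.
- by move=> j Hj; rewrite subr_ge0; apply: Hb; apply: conv_pt.
- move=> j Hj; rewrite subr_eq0.
  case: (boolP (j \in T)) => HjT.
    by move: (HjT); rewrite hT Hj /= => ->; rewrite (subsetP HTS2).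
  have Hjb : (dotv c (a j) == b) = false by apply/negbTE; apply: contra HjT; rewrite hT Hj.
  by rewrite Hjb (Hv1u j Hj HjT) (negbTE Hv1S2).
- move=> j Hj HjS; apply: Hv2u => //; apply: contra HjS; exact: (subsetP HTS1).
Qed.



Lemma lifting (R : realType) (d n : nat) (a : 'I_n -> 'rV[R]_d) (S1 S2 : {set 'I_n})
  (c : 'rV[R]_d) (b : R) (v2 : 'I_n) :
  affindep_set a S1 ->
  (forall j, j \in S1 -> 0 <= dotv c (a j) - b) ->
  (forall j, j \in S1 -> (dotv c (a j) - b == 0) = (j \in S2)) ->
  v2 \in S2 /\ v2 \notin S1 -> dotv c (a v2) - b < 0 ->
  (forall j, j \in S2 -> j \notin S1 -> j = v2) ->
  exists h : 'I_n -> R, regular_triangulation a h /\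
      lower_cell a h S1 /\ lower_cell a h S2.
Proof.
move=> HiS1 Hge0 Heq0 [Hv2S Hv2S1] Hv2neg Hv2u.
pose del j := dotv c (a j) - b.
pose M := \sum_j `|del j|.
have HM : forall j, `|del j| <= M.
  move=> j; rewrite /M (bigD1 j) //= lerDl sumr_ge0 // => i _; exact: normr_ge0.
have HM0 : 0 <= M by apply: sumr_ge0 => j _; exact: normr_ge0.
pose hf (t : R) j := if j \in S1 then del j else if j \in S2 then 0 else M + t ^+ j.+1.
have Hout : forall t j, 0 < t -> j \notin S1 -> j \notin S2 -> M < hf t j.
  move=> t j Ht h1 h2; rewrite /hf (negbTE h1) (negbTE h2).
  have := exprn_gt0 j.+1 Ht; move=> h; lra.
have cells : forall t, 0 < t -> lower_cell a (hf t) S1 /\ lower_cell a (hf t) S2.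
  move=> t Ht.
  have hge1 : forall j, del j <= hf t j.
    move=> j; case: (boolP (j \in S1)) => h1; first by rewrite /hf h1.
    case: (boolP (j \in S2)) => h2.
      by rewrite /hf (negbTE h1) h2 (Hv2u j h2 h1) ltW.
    have := Hout t j Ht h1 h2; have := HM j; have := ler_norm (del j); move=> *; lra.
  have heq1 : forall j, (hf t j == del j) = (j \in S1).
    move=> j; case: (boolP (j \in S1)) => h1; first by rewrite /hf h1 eqxx.
    case: (boolP (j \in S2)) => h2.
      by rewrite /hf (negbTE h1) h2 (Hv2u j h2 h1) eq_sym lt_eqF.
    have := Hout t j Ht h1 h2; have := HM j; have := ler_norm (del j); move=> *.
    by apply/negbTE/eqP => H; lra.
  have hge2 : forall j, 0 <= hf t j.
    move=> j; case: (boolP (j \in S1)) => h1; first by rewrite /hf h1 Hge0.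
    case: (boolP (j \in S2)) => h2; first by rewrite /hf (negbTE h1) h2.
    have := Hout t j Ht h1 h2; move=> *; lra.
  have heq2 : forall j, (hf t j == 0) = (j \in S2).
    move=> j; case: (boolP (j \in S1)) => h1; first by rewrite /hf h1 Heq0.
    case: (boolP (j \in S2)) => h2; first by rewrite /hf (negbTE h1) h2 eqxx.
    have := Hout t j Ht h1 h2; move=> *.
    by apply/negbTE/eqP => H; lra.
  split.
  - exists (- c), 1, (- b); split; first exact: ltr01.
    split.
      move=> j; rewrite dotvN mul1r; have := hge1 j; rewrite /del => *; lra.
    move=> j; rewrite -heq1 dotvN mul1r /del.
    by apply/idP/idP => /eqP H; apply/eqP; lra.
  - exists 0, 1, 0; split; first exact: ltr01.
    split.
      by move=> j; rewrite dotv0l mul1r add0r.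
    by move=> j; rewrite dotv0l mul1r add0r heq2.
have Hex : forall C : {set 'I_n}, exists l : 'I_n -> R, ~ affindep_set a C ->
    [/\ (forall j, j \notin C -> l j = 0), \sum_j l j = 0, \sum_j l j *: a j = 0 &
        exists j, l j != 0].
  move=> C; case: (pselect (affindep_set a C)) => HC.
    by exists (fun _ => 0).
  apply: contrapT => Hno; apply: HC => l H1 H2 H3 j; apply: contrapT => Hj.
  by apply: Hno; exists l => _; split => //; exists j; apply/eqP.
have [lam Hlam] := choice Hex.
pose hp j : {poly R} := if j \in S1 then (del j)%:P else if j \in S2 then 0 else M%:P + 'X^(j.+1).
have hpE : forall t j, (hp j).[t] = hf t j.
  move=> t j; rewrite /hp /hf; case: ifP => _; first by rewrite hornerC.
  by case: ifP => _; rewrite ?horner0 // hornerD hornerC hornerXn.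
pose PC C := \sum_j lam C j *: hp j.
have PCE : forall C t, (PC C).[t] = \sum_j lam C j * hf t j.
  by move=> C t; rewrite horner_sum; apply: eq_bigr => j _; rewrite hornerZ hpE.
have PCnz : forall C, ~ affindep_set a C -> PC C != 0.
  move=> C HC; have [H1 H2 H3 [j0 Hj0]] := Hlam C HC.
  case: (boolP [exists j, (j \notin S1) && (j \notin S2) && (lam C j != 0)]).
  - move/existsP => [j /andP [/andP [Hj1 Hj2] Hlj]].
    apply/negP => /eqP HP; have := congr1 (fun p : {poly R} => p`_j.+1) HP.
    rewrite coef0 /PC coef_sum (bigD1 j) //= big1 ?addr0.
      rewrite coefZ /hp (negbTE Hj1) (negbTE Hj2) coefD coefC coefXn eqxx /= add0r mulr1.
      by move=> /eqP; rewrite (negbTE Hlj).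
    move=> i Hij; rewrite coefZ /hp; case: ifP => _; first by rewrite coefC /= mulr0.
    case: ifP => _; first by rewrite coef0 mulr0.
    have Hji : (j.+1 == i.+1)%N = false.
      by rewrite eqSS; apply/negbTE; rewrite eq_sym; exact: Hij.
    by rewrite coefD coefC coefXn /= Hji add0r mulr0.
  - move/existsPn => Hn.
    have Hl0 : forall j, j \notin S1 -> j \notin S2 -> lam C j = 0.
      by move=> j h1 h2; move: (Hn j); rewrite h1 h2 /= negbK => /eqP.
    pose P := \sum_j lam C j * (if j \in S1 then del j else 0).
    have HPC0 : (PC C).[0] = P.
      rewrite PCE; apply: eq_bigr => j _; rewrite /hf.
      case: (boolP (j \in S1)) => h1 //; case: (boolP (j \in S2)) => h2 //.
      by rewrite Hl0 // !mul0r.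
    have Hsum : \sum_j lam C j * del j = 0.
      under eq_bigr => j _ do rewrite /del mulrBr.
      by rewrite sumrB -(dotv_sum c (lam C) a) H3 dotv0r -mulr_suml H2 mul0r subrr.
    have Hsplit : \sum_j lam C j * del j = P + lam C v2 * del v2.
      have : \sum_j lam C j * del j =
         \sum_j (lam C j * (if j \in S1 then del j else 0) + (j == v2)%:R * (lam C j * del j)).
        apply: eq_bigr => j _; case: (boolP (j \in S1)) => h1.
          have : j != v2 by apply: contra Hv2S1 => /eqP <-.
          by move/negbTE ->; rewrite mul0r addr0.
        case: (boolP (j == v2)) => hv; first by rewrite mulr0 add0r mul1r.
        case: (boolP (j \in S2)) => h2; first by move: hv; rewrite (Hv2u j h2 h1) eqxx.
        by rewrite Hl0 // !mul0r addr0.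
      move=> ->; rewrite big_split /=; congr (_ + _).
      rewrite (bigD1 v2) //= eqxx mul1r big1 ?addr0 // => j /negbTE ->; by rewrite mul0r.
    apply/negP => /eqP HP0.
    have P0 : P = 0 by rewrite -HPC0 HP0 horner0.
    have Hv2l : lam C v2 = 0.
      move: Hsum; rewrite Hsplit P0 add0r => /eqP; rewrite mulf_eq0 => /orP [/eqP //|].
      by rewrite lt_eqF.
    move: Hj0; rewrite (HiS1 (lam C)) ?eqxx // => j hj.
    case: (boolP (j == v2)) => [/eqP -> //|hv].
    apply: Hl0 => //; apply: contra hv => h2; apply/eqP; exact: Hv2u.
pose Q := \prod_(C : {set 'I_n}) (if PC C == 0 then 1 else PC C).
have Qnz : Q != 0.
  apply/prodf_neq0 => C _; case: ifP => [_|/negbT //]; exact: oner_neq0.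
have [t [Ht HQt]] : exists t, 0 < t /\ Q.[t] != 0.
  pose rs := [seq (i.+1)%:R : R | i <- iota 0 (size Q)].
  have : ~~ all (root Q) rs.
    apply/negP => Hall.
    have Hu : uniq rs.
      rewrite map_inj_uniq ?iota_uniq // => i j /eqP; rewrite eqr_nat eqSS => /eqP.
      by [].
    have := max_poly_roots Qnz Hall Hu; by rewrite size_map size_iota ltnn.
  move/allPn => [x /mapP [i _ ->] Hx]; exists i.+1%:R; split => //.
have Hgood : forall C, ~ affindep_set a C -> (PC C).[t] != 0.
  move=> C HC; apply: contra HQt => /eqP H0; rewrite horner_prod.
  apply/prodf_eq0; exists C => //; by rewrite (negbTE (PCnz C HC)) H0.
exists (hf t); split; last exact: cells.
move=> C [cc [c0 [bb [Hc0 [Hge Heq]]]]].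
have Hind : affindep_set a C.
  apply: contrapT => HC; have [H1 H2 H3 _] := Hlam C HC.
  move: (Hgood C HC); rewrite PCE => /negP; apply; apply/eqP.
  have : \sum_j lam C j * (dotv cc (a j) + c0 * hf t j) = 0.
    transitivity (\sum_j lam C j * bb).
      apply: eq_bigr => j _; case: (boolP (j \in C)) => Hj.
        by move: (Heq j); rewrite Hj => /esym/eqP ->.
      by rewrite H1 // !mul0r.
    by rewrite -mulr_suml H2 mul0r.
  under eq_bigr => j _ do rewrite mulrDr.
  rewrite big_split /= -(dotv_sum cc (lam C) a) H3 dotv0r add0r.
  under eq_bigr => j _ do rewrite mulrCA.
  rewrite -mulr_sumr => /eqP; rewrite mulf_eq0 (gt_eqF Hc0) /= => /eqP //.
split => // y; split; first exact: vertex_pt.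
by move=> [j Hj ->]; exact: vertex_indep.
Qed.


Theorem proposition2p5 (R : realType) (d n : nat)
    (aZ : 'I_n -> 'rV[int]_d) (S1 S2 : {set 'I_n}) :
  injective aZ ->
  (d + 2 <= n)%N ->
  has_dim (conv (ptsR R aZ) setT) d ->
  is_simplex (ptsR R aZ) S1 ->
  is_simplex (ptsR R aZ) S2 ->
  share_facet (ptsR R aZ) S1 S2 ->
  (exists h : 'I_n -> R, in_cone (ptsR R aZ) S1 S2 h) /\
  (exists h : 'I_n -> R, regular_triangulation (ptsR R aZ) h /\
      lower_cell (ptsR R aZ) h S1 /\ lower_cell (ptsR R aZ) h S2).
Proof.
move=> Hinj _ _ HS1 HS2 Hsh.
have ainj := @ptsR_inj R d n aZ Hinj.
have [c [b [v2 [H1 H2 H3 H4 H5]]]] := geom ainj HS1 HS2 Hsh.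
have [h [Htri [HL1 HL2]]] := lifting (proj2 HS1) H1 H2 H3 H4 H5.
by split; exists h; split.
Qed.
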